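(* Let $I$ be an instance of SPA-S (defined in the context), and let $\mathcal{M}$ be the set of all stable matchings of $I$, partially ordered by the student-oriented dominance relation $\preceq$. Then $(\mathcal{M},\preceq)$ is a distributive lattice. For $M,M'\in\mathcal{M}$, the meet of $M$ and $M'$ is the assignment $M\land M'$ and the join is the assignment $M\lor M'$, where $M\land M'$ and $M\lor M'$ are defined in the context; in particular both are stable matchings of $I$.
   Context: An instance $I$ of SPA-S consists of a finite set $\mathcal{S}$ of students, a finite set $\mathcal{P}$ of projects and a finite set $\mathcal{L}$ of lecturers. Each student $s_i$ ranks a subset $A_i\subseteq\mathcal{P}$ (its acceptable projects) in strict order. Each project is offered by exactly one lecturer; lecturer $l_k$ offers a nonempty set $P_k\subseteq\mathcal{P}$, and the sets $P_k$ partition $\mathcal{P}$. Each lecturer $l_k$ ranks in strict order the students who find at least one project of $P_k$ acceptable. Each project $p_j$ has capacity $c_j\in\mathbb{Z}^+$ and each lecturer $l_k$ has capacity $d_k\in\mathbb{Z}^+$ with $\max\{c_j:p_j\in P_k\}\le d_k\le\sum\{c_j:p_j\in P_k\}$. A pair $(s_i,p_j)$ with $p_j$ offered by $l_k$ is acceptable if $p_j\in A_i$ and $s_i$ is on $l_k$'s list. A matching $M$ is a set of acceptable pairs such that each student is in at most one pair, $|M(p_j)|\le c_j$ for each project and $|M(l_k)|\le d_k$ for each lecturer, where $M(s_i)$ is the project of $s_i$, $M(p_j)$ is the set of students assigned to $p_j$, and $M(l_k)$ is the set of students assigned to projects in $P_k$. A project (lecturer) is undersubscribed/full in $M$ if the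 number of its assigned students is less than/equal to its capacity. An acceptable pair $(s_i,p_j)\notin M$, with $p_j$ offered by $l_k$, blocks $M$ if ($s_i$ is unassigned in $M$ or $s_i$ prefers $p_j$ to $M(s_i)$) and one of the following holds: (P1) $p_j$ and $l_k$ are both undersubscribed in $M$; (P2) $p_j$ is undersubscribed, $l_k$ is full and $s_i\in M(l_k)$; (P3) $p_j$ is undersubscribed, $l_k$ is full and $l_k$ prefers $s_i$ to the worst student in $M(l_k)$; (P4) $p_j$ is full and $l_k$ prefers $s_i$ to the worst student in $M(p_j)$. $M$ is stable if no pair blocks it. A student $s_i$ prefers $M$ to $M'$ if $s_i$ is assigned in both and prefers $M(s_i)$ to $M'(s_i)$; $s_i$ is indifferent if unassigned in both or $M(s_i)=M'(s_i)$. For stable $M,M'$, $M\preceq M'$ means every student prefers $M$ to $M'$ or is indifferent between them. For stable matchings $M,M'$, $M\land M'$ assigns each student unassigned in both to nothing, each student assigned to the same project in both to that project, and every other student to the better (in her preference) of her projects in $M$ and $M'$; $M\lor M'$ is defined identically but with the worse of the two projects. *)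

(* Defs.v *)
From mathcomp Require Import all_boot all_order.
Set Implicit Arguments. Unset Strict Implicit. Unset Printing Implicit Defensive.

(* A student's strict preference list over her acceptable projects is given
   by an acceptability predicate and a rank function injective on it
   (smaller rank = more preferred).  Likewise for lecturers. *)
Record spa_instance (S P L : finType) := SpaInstance {
  sacc : S -> P -> bool;
  srank : S -> P -> nat;
  srank_inj : forall s, {in sacc s &, injective (srank s)};
  lec : P -> L;
  lec_nonempty : forall l : L, exists p, lec p = l;
  lrank : L -> S -> nat;
  lrank_inj : forall l, {in [pred s | [exists p, (lec p == l) && sacc s p]] &,
                           injective (lrank l)};
  pcap : P -> nat;
  lcap : L -> nat;
  pcap_pos : forall p, 0 < pcap p;
  lcap_pos : forall l, 0 < lcap l;
  lcap_ge : forall p, pcap p <= lcap (lec p);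
  lcap_le : forall l, lcap l <= \sum_(p | lec p == l) pcap p
}.

Section SPAS.
Variables (S P L : finType) (I : spa_instance S P L).

Definition on_list (l : L) (s : S) : bool :=
  [exists p, (lec I p == l) && sacc I s p].

Definition acceptable (s : S) (p : P) : bool :=
  sacc I s p && on_list (lec I p) s.

Definition sprefers (s : S) (p q : P) : bool := srank I s p < srank I s q.
Definition lprefers (l : L) (s t : S) : bool := lrank I l s < lrank I l t.

(* An assignment: each student is in at most one pair. *)
Definition assignment := {ffun S -> option P}.

Definition Mp (M : assignment) (p : P) : {set S} := [set s | M s == Some p].
Definition Ml (M : assignment) (l : L) : {set S} :=
  [set s | if M s is Some p then lec I p == l else false].

Definition matching (M : assignment) : Prop :=
  [/\ forall s p, M s = Some p -> acceptable s p,
      forall p, #|Mp M p| <= pcap I p &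
      forall l, #|Ml M l| <= lcap I l].

Definition p_under M p := #|Mp M p| < pcap I p.
Definition p_full M p := #|Mp M p| == pcap I p.
Definition l_under M l := #|Ml M l| < lcap I l.
Definition l_full M l := #|Ml M l| == lcap I l.

(* l prefers s to the worst student of X (X nonempty in every use) *)
Definition prefers_to_worst (l : L) (s : S) (X : {set S}) : bool :=
  [exists t in X, lprefers l s t].

Definition blocks (M : assignment) (s : S) (p : P) : bool :=
  let l := lec I p in
  [&& acceptable s p, M s != Some p,
      (if M s is Some q then sprefers s p q else true) &
      [|| p_under M p && l_under M l,
          [&& p_under M p, l_full M l & s \in Ml M l],
          [&& p_under M p, l_full M l & prefers_to_worst l s (Ml M l)]
        | p_full M p && prefers_to_worst l s (Mp M p)]].

Definition stable (M : assignment) : Prop :=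
  matching M /\ forall s p, ~~ blocks M s p.

Definition sprefers_opt (s : S) (o o' : option P) : bool :=
  match o, o' with Some p, Some q => sprefers s p q | _, _ => false end.

Definition sdom (M M' : assignment) : Prop :=
  forall s, sprefers_opt s (M s) (M' s) || (M s == M' s).

(* better / worse of two options for student s; in the (for stable
   matchings impossible) case that s is assigned in exactly one of them,
   being assigned counts as better. *)
Definition better_opt (s : S) (o o' : option P) : option P :=
  match o, o' with
  | Some p, Some q => if srank I s p <= srank I s q then Some p else Some q
  | Some p, None => Some p
  | None, o' => o'
  end.
Definition worse_opt (s : S) (o o' : option P) : option P :=
  match o, o' with
  | Some p, Some q => if srank I s p <= srank I s q then Some q else Some p
  | _, _ => None
  end.

Definition meet (M M' : assignment) : assignment :=
  [ffun s => better_opt s (M s) (M' s)].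
Definition join (M M' : assignment) : assignment :=
  [ffun s => worse_opt s (M s) (M' s)].

End SPAS.

(* Main.v *)
Require Import Defs.
From mathcomp Require Import all_boot all_order.
From mathcomp Require Import zify.
Set Implicit Arguments. Unset Strict Implicit. Unset Printing Implicit Defensive.

Section Proofs.
Variables (S P L : finType) (I : spa_instance S P L).
Implicit Types (M N K : assignment S P) (s t : S) (p q : P) (l : L).

Definition bt K K' s : bool :=
  match K s, K' s with
  | Some p, Some q => sprefers I s p q
  | Some _, None => true
  | None, _ => false end.
Definition Bs K K' : {set S} := [set s | bt K K' s].
Definition Es K K' : {set S} := [set s | K s == K' s].
Definition asg K : {set S} := [set s | K s != None].
Definition pref s p (o : option P) : bool :=
  if o is Some q then sprefers I s p q else true.
Definition alpha K K' l : bool :=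
  ~~ l_under I K' l &&
  [exists s0, [&& s0 \in Ml I K l, s0 \notin Ml I K' l &
      [forall t in Ml I K' l, lrank I l t <= lrank I l s0]]].

Lemma inMl K l s : (s \in Ml I K l) = (if K s is Some p then lec I p == l else false).
Proof. by rewrite inE. Qed.
Lemma inMp K p s : (s \in Mp K p) = (K s == Some p).
Proof. by rewrite inE. Qed.
Lemma Mp_Ml K p s : s \in Mp K p -> s \in Ml I K (lec I p).
Proof. by rewrite !inE => /eqP ->. Qed.
Lemma match_acc K s p : matching I K -> K s = Some p -> acceptable I s p.
Proof. by case=> H _ _; apply: H. Qed.
Lemma acc_on s p : acceptable I s p -> on_list I (lec I p) s.
Proof. by case/andP. Qed.
Lemma Ml_on K l s : matching I K -> s \in Ml I K l -> on_list I l s.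
Proof.
move=> HK; rewrite inMl; case E: (K s) => [p|] // /eqP <-.
exact: acc_on (match_acc HK E).
Qed.
Lemma linj l s t : on_list I l s -> on_list I l t -> lrank I l s = lrank I l t -> s = t.
Proof. move=> hs ht; exact: (lrank_inj hs ht). Qed.
Lemma sinj s p q : sacc I s p -> sacc I s q -> srank I s p = srank I s q -> p = q.
Proof. move=> hp hq; exact: (srank_inj hp hq). Qed.

Lemma pfull K p : matching I K -> ~~ p_under I K p -> #|Mp K p| = pcap I p.
Proof. by case=> _ H _; rewrite /p_under -leqNgt => h; apply/eqP; rewrite eqn_leq H h. Qed.
Lemma lfull K l : matching I K -> ~~ l_under I K l -> #|Ml I K l| = lcap I l.
Proof. by case=> _ _ H; rewrite /l_under -leqNgt => h; apply/eqP; rewrite eqn_leq H h. Qed.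

Lemma pref_neq s p o : pref s p o -> o != Some p.
Proof. by case: o => // q; rewrite /pref /sprefers; apply: contraTneq => [[->]]; rewrite ltnn. Qed.

Lemma nbl K s p : stable I K -> acceptable I s p -> pref s p (K s) ->
 (p_under I K p -> [/\ ~~ l_under I K (lec I p), s \notin Ml I K (lec I p) &
     forall t, t \in Ml I K (lec I p) -> lrank I (lec I p) t <= lrank I (lec I p) s]) /\
 (~~ p_under I K p -> forall t, t \in Mp K p -> lrank I (lec I p) t <= lrank I (lec I p) s).
Proof.
case=> [[_ Hp Hl] Hb] hacc hpr.
have hne := pref_neq hpr.
move: (Hb s p); rewrite /blocks hacc hne /=.
move: hpr; rewrite /pref => -> /=.
rewrite !negb_or => /and4P [h1 h2 h3 h4]; split.
- move=> hu.
  have lu : ~~ l_under I K (lec I p) by move: h1; rewrite hu.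
  have lf : l_full I K (lec I p) by rewrite /l_full eqn_leq Hl /= leqNgt.
  split => //; first by move: h2; rewrite hu lf.
  move=> t ht; move: h3; rewrite hu lf /= /prefers_to_worst => /existsPn /(_ t).
  by rewrite ht /lprefers -leqNgt.
- move=> hf t ht.
  have pf : p_full I K p by rewrite /p_full eqn_leq Hp leqNgt.
  by move: h4; rewrite pf /= => /existsPn /(_ t); rewrite ht /lprefers -leqNgt.
Qed.

Lemma nb_of N s p : matching I N ->
 (acceptable I s p -> pref s p (N s) ->
 (p_under I N p -> [/\ ~~ l_under I N (lec I p), s \notin Ml I N (lec I p) &
     forall t, t \in Ml I N (lec I p) -> lrank I (lec I p) t <= lrank I (lec I p) s]) /\
 (~~ p_under I N p -> forall t, t \in Mp N p -> lrank I (lec I p) t <= lrank I (lec I p) s))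
 -> ~~ blocks I N s p.
Proof.
case=> _ Hp Hl H; apply/negP; rewrite /blocks => /and4P [hacc _ hpr hb].
have [H1 H2] := H hacc hpr.
case hu: (p_under I N p) in hb.
- have [lu ns hall] := H1 hu.
  have pf : p_full I N p = false by rewrite /p_full ltn_eqF.
  move: hb; rewrite (negbTE lu) (negbTE ns) pf /= andbF /= /prefers_to_worst orbF => /andP [_].
  by move=> /existsP [t /andP [ht]]; rewrite /lprefers ltnNge hall.
- have hall := H2 (negbT hu).
  move: hb => /= /andP [_]; rewrite /prefers_to_worst => /existsP [t /andP [ht]].
  by rewrite /lprefers ltnNge hall.
Qed.

Lemma stable_of N : matching I N ->
  (forall s p, acceptable I s p -> pref s p (N s) ->
 (p_under I N p -> [/\ ~~ l_under I N (lec I p), s \notin Ml I N (lec I p) &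
     forall t, t \in Ml I N (lec I p) -> lrank I (lec I p) t <= lrank I (lec I p) s]) /\
 (~~ p_under I N p -> forall t, t \in Mp N p -> lrank I (lec I p) t <= lrank I (lec I p) s))
 -> stable I N.
Proof. by move=> HN H; split => // s p; apply: nb_of => //; apply: H. Qed.


Lemma bt_excl K K' s : bt K K' s -> bt K' K s -> False.
Proof.
rewrite /bt; case: (K s) => [p|]; case: (K' s) => [q|] //.
by rewrite /sprefers => h1 h2; move: (ltn_trans h1 h2); rewrite ltnn.
Qed.
Lemma bt_neq K K' s : bt K K' s -> K s != K' s.
Proof.
rewrite /bt; case: (K s) => [p|]; case: (K' s) => [q|] //= h.
by apply/eqP => [[e]]; move: h; rewrite e /sprefers ltnn.
Qed.
Lemma bt_pref K K' s p : bt K K' s -> K s = Some p -> pref s p (K' s).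
Proof. by rewrite /bt => + E; rewrite E; case: (K' s). Qed.
Lemma bt_None K K' s p : K s = Some p -> K' s = None -> bt K K' s.
Proof. by rewrite /bt => -> ->. Qed.

Lemma classify K K' s : matching I K -> matching I K' ->
  [\/ [/\ K s = K' s, bt K K' s = false & bt K' K s = false],
      [/\ bt K K' s, bt K' K s = false & K s != K' s] |
      [/\ bt K' K s, bt K K' s = false & K s != K' s]].
Proof.
move=> HK HK'.
have nb1 : bt K K' s -> bt K' K s = false.
  by move=> h; apply/negbTE/negP => h'; exact: bt_excl h h'.
have nb2 : bt K' K s -> bt K K' s = false.
  by move=> h; apply/negbTE/negP => h'; exact: bt_excl h h'.
case h1: (bt K K' s); first by constructor 2; split => //; [exact: nb1 | exact: bt_neq].
case h2: (bt K' K s).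
  by constructor 3; split => //; rewrite eq_sym; exact: bt_neq.
constructor 1; split => //.
move: h1 h2; rewrite /bt.
case E: (K s) => [p|]; case E': (K' s) => [q|] //.
rewrite /sprefers => /negbT h1 /negbT h2.
have := match_acc HK E; have := match_acc HK' E'.
case/andP => aq _ /andP [ap _].
congr Some; apply: sinj ap aq _; apply/eqP; rewrite eqn_leq.
by rewrite -!leqNgt in h1 h2; rewrite h1 h2.
Qed.

Lemma L1 K K' s p : matching I K -> stable I K' -> bt K K' s -> K s = Some p ->
 (p_under I K' p -> [/\ ~~ l_under I K' (lec I p), s \notin Ml I K' (lec I p) &
     forall t, t \in Ml I K' (lec I p) -> lrank I (lec I p) t <= lrank I (lec I p) s]) /\
 (~~ p_under I K' p -> forall t, t \in Mp K' p -> lrank I (lec I p) t <= lrank I (lec I p) s).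
Proof. move=> HK HK' h E; exact: (nbl HK' (match_acc HK E) (bt_pref h E)). Qed.

Lemma L1r K K' s p t : matching I K -> stable I K' -> bt K K' s -> K s = Some p ->
  t \in Mp K' p -> lrank I (lec I p) t <= lrank I (lec I p) s.
Proof.
move=> HK HK' h E ht; have [H1 H2] := L1 HK HK' h E.
case hu: (p_under I K' p); last exact: H2 (negbT hu) _ ht.
by have [_ _ H] := H1 hu; apply: H; exact: Mp_Ml.
Qed.

Lemma L1a K K' s p : matching I K -> stable I K' -> bt K K' s -> K s = Some p ->
  p_under I K' p -> alpha K K' (lec I p).
Proof.
move=> HK HK' h E hu; have [H1 _] := L1 HK HK' h E.
have [lu ns H] := H1 hu.
rewrite /alpha lu /=; apply/existsP; exists s.
rewrite ns (Mp_Ml (p:=p)) ?inE ?E //=.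
by apply/forallP => t; apply/implyP => ht; apply: H.
Qed.

Lemma NA K K' s t p : stable I K -> stable I K' -> bt K K' s -> K s = Some p ->
  bt K' K t -> K' t = Some p -> False.
Proof.
move=> HK HK' hs es ht et.
have h1 : lrank I (lec I p) t <= lrank I (lec I p) s.
  by apply: (L1r (proj1 HK) HK' hs es); rewrite inE et.
have h2 : lrank I (lec I p) s <= lrank I (lec I p) t.
  by apply: (L1r (proj1 HK') HK ht et); rewrite inE es.
have os : on_list I (lec I p) s by apply: acc_on (match_acc (proj1 HK) es).
have ot : on_list I (lec I p) t by apply: acc_on (match_acc (proj1 HK') et).
have e : s = t by apply: linj os ot _; apply/eqP; rewrite eqn_leq h1 h2.
by subst t; exact: bt_excl hs ht.
Qed.

Lemma alpha_excl K K' l : matching I K -> matching I K' ->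
  alpha K K' l -> alpha K' K l -> False.
Proof.
move=> HK HK' /andP [_ /existsP [s0 /and3P [h1 h2 /forallP h3]]].
move=> /andP [_ /existsP [t0 /and3P [g1 g2 /forallP g3]]].
have a1 := implyP (h3 t0) g1; have a2 := implyP (g3 s0) h1.
have e : s0 = t0.
  apply: linj (Ml_on HK h1) (Ml_on HK' g1) _; apply/eqP; rewrite eqn_leq a1 a2 //.
by move: h2; rewrite e g1.
Qed.

Lemma decomp K K' (A : {set S}) : matching I K -> matching I K' ->
  #|A| = #|A :&: Bs K K'| + #|A :&: Bs K' K| + #|A :&: Es K K'|.
Proof.
move=> HK HK'.
rewrite -(cardsID (Bs K K') A) -addnA; congr addn.
rewrite -(cardsID (Bs K' K) (A :\: Bs K K')); congr addn; apply: eq_card => s;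
  rewrite !inE; case: (classify s HK HK') => [[e h1 h2]|[h1 h2 h3]|[h1 h2 h3]];
  rewrite ?e ?eqxx ?h1 ?h2 ?(negbTE h3) /= ?andbT ?andbF //.
Qed.

Lemma Mp_Es K K' p : Mp K p :&: Es K K' = Mp K' p :&: Es K K'.
Proof. by apply/setP => s; rewrite !inE; case e: (K s == K' s); rewrite ?(eqP e) ?andbF. Qed.
Lemma Ml_Es K K' l : Ml I K l :&: Es K K' = Ml I K' l :&: Es K K'.
Proof. by apply/setP => s; rewrite !inE; case e: (K s == K' s); rewrite ?(eqP e) ?andbF. Qed.
Lemma Es_sym K K' : Es K' K = Es K K'.
Proof. by apply/setP => s; rewrite !inE eq_sym. Qed.

Lemma sum_opt (Y : finType) (f : S -> option Y) (A : {set S}) :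
  \sum_(y : Y) #|[set s in A | f s == Some y]| = #|[set s in A | f s != None]|.
Proof.
rewrite -sum1dep_card.
under eq_bigr => y _ do rewrite -sum1dep_card big_mkcond /=.
rewrite exchange_big /= [RHS]big_mkcond /=; apply: eq_bigr => s _.
case: (s \in A) => /=; last by rewrite big1.
case: (f s) => [y0|] /=; last by rewrite big1.
rewrite (bigD1 y0) //= eqxx big1 // => y hy.
by case: ifP => // /eqP [e]; rewrite e eqxx in hy.
Qed.

Lemma PL K (T : {set S}) l :
  #|Ml I K l :&: T| = \sum_(p | lec I p == l) #|Mp K p :&: T|.
Proof.
rewrite big_mkcond /=.
have -> : #|Ml I K l :&: T| = #|[set s in Ml I K l :&: T | K s != None]|.
  by apply: eq_card => s; rewrite !inE; case: (K s) => [p|] /=; rewrite ?andbT ?andbF.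
rewrite -sum_opt; apply: eq_bigr => p _.
case: ifP => hl.
  apply: eq_card => s; rewrite !inE.
  by case e: (K s == Some p); rewrite ?andbF // (eqP e) /= hl ?andbT.
apply/eqP; rewrite cards_eq0; apply/eqP/setP => s; rewrite !inE.
by case e: (K s == Some p); rewrite ?andbF // (eqP e) /= hl.
Qed.

Lemma GL K (T : {set S}) :
  \sum_l #|Ml I K l :&: T| = #|T :&: asg K|.
Proof.
have -> : #|T :&: asg K| = #|[set s in T | omap (lec I) (K s) != None]|.
  by apply: eq_card => s; rewrite !inE; case: (K s); rewrite ?andbT ?andbF.
rewrite -sum_opt; apply: eq_bigr => l _; apply: eq_card => s; rewrite !inE.
by case: (K s) => //= [p|]; rewrite ?andbF // andbC.
Qed.

Lemma sum_eq_pt (J : finType) (Pr : pred J) (f g : J -> nat) :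
  (forall i, Pr i -> f i <= g i) -> \sum_(i | Pr i) g i <= \sum_(i | Pr i) f i ->
  forall i, Pr i -> f i = g i.
Proof.
move=> H Hs i Pi; apply/eqP; rewrite eqn_leq H //=; rewrite leqNgt; apply/negP => lt.
move: Hs; rewrite (bigD1 i Pi) /= [X in _ <= X](bigD1 i Pi) /=.
have : \sum_(j | Pr j && (j != i)) f j <= \sum_(j | Pr j && (j != i)) g j.
  by apply: leq_sum => j /andP [pj _]; apply: H.
lia.
Qed.

Lemma caps K : matching I K -> (forall p, #|Mp K p| <= pcap I p) /\ (forall l, #|Ml I K l| <= lcap I l).
Proof. by case. Qed.

Lemma Qp_pos M M' p : stable I M -> stable I M' -> ~~ alpha M M' (lec I p) ->
  0 < #|Mp M p :&: Bs M M'| ->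
  #|Mp M' p :&: Bs M' M| = 0 /\ #|Mp M' p| = pcap I p.
Proof.
move=> HM HM' na; rewrite card_gt0 => /set0Pn [x]; rewrite !inE => /andP [ex bx].
have ex' : M x = Some p by apply/eqP.
split.
  apply/eqP; rewrite cards_eq0; apply/eqP/setP => y; rewrite !inE.
  apply/negbTE/negP => /andP [/eqP ey by']; exact: NA HM HM' bx ex' by' ey.
apply: pfull (proj1 HM') _; apply/negP => hu.
by move: na; rewrite (L1a (proj1 HM) HM' bx ex' hu).
Qed.

Lemma Palpha M M' p : stable I M -> stable I M' -> alpha M M' (lec I p) ->
  0 < #|Mp M' p :&: Bs M' M| ->
  #|Mp M p :&: Bs M M'| = 0 /\ #|Mp M p| = pcap I p.
Proof.
move=> HM HM' ha; apply: (Qp_pos HM' HM); apply/negP => hb.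
exact: alpha_excl (proj1 HM) (proj1 HM') ha hb.
Qed.

Lemma Q_alpha M M' l : stable I M -> stable I M' -> alpha M M' l ->
 #|Ml I M l :&: Bs M M'| + #|Ml I M' l :&: Bs M' M| <=
   #|Ml I M' l :&: Bs M M'| + #|Ml I M l :&: Bs M' M| /\
 (#|Ml I M' l :&: Bs M M'| + #|Ml I M l :&: Bs M' M| <=
   #|Ml I M l :&: Bs M M'| + #|Ml I M' l :&: Bs M' M| ->
  #|Ml I M l| = #|Ml I M' l| /\
  forall p, lec I p = l -> #|Mp M' p :&: Bs M' M| = #|Mp M p :&: Bs M' M|).
Proof.
move=> HM HM' ha.
have hpt : forall p, lec I p == l -> #|Mp M' p :&: Bs M' M| <= #|Mp M p :&: Bs M' M|.
  move=> p /eqP hl; have [->//|pos] := posnP #|Mp M' p :&: Bs M' M|.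
  have ha' : alpha M M' (lec I p) by rewrite hl.
  have [h1 h2] := Palpha HM HM' ha' pos.
  have d1 := decomp (Mp M p) (proj1 HM) (proj1 HM').
  have d2 := decomp (Mp M' p) (proj1 HM) (proj1 HM').
  rewrite Mp_Es in d1; have [cp _] := caps (proj1 HM'); have := cp p; lia.
have sB := PL M (Bs M' M) l; have sB' := PL M' (Bs M' M) l.
have le : \sum_(p | lec I p == l) #|Mp M' p :&: Bs M' M| <=
          \sum_(p | lec I p == l) #|Mp M p :&: Bs M' M| by apply: leq_sum.
move: (ha) => /andP [lu _]; have lf := lfull (proj1 HM') lu.
have [_ cl] := caps (proj1 HM); have := cl l.
have d1 := decomp (Ml I M l) (proj1 HM) (proj1 HM').
have d2 := decomp (Ml I M' l) (proj1 HM) (proj1 HM').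
rewrite Ml_Es in d1 => hcl.
split; first by lia.
move=> h; split; first by lia.
move=> p hp; apply: (sum_eq_pt hpt); last by apply/eqP.
lia.
Qed.

Lemma Qg_p M M' p : stable I M -> stable I M' -> ~~ alpha M M' (lec I p) ->
  ~~ alpha M' M (lec I p) ->
  #|Mp M p :&: Bs M M'| + #|Mp M' p :&: Bs M' M| <=
  #|Mp M' p :&: Bs M M'| + #|Mp M p :&: Bs M' M|.
Proof.
move=> HM HM' na nb.
have d1 := decomp (Mp M p) (proj1 HM) (proj1 HM').
have d2 := decomp (Mp M' p) (proj1 HM) (proj1 HM').
rewrite Mp_Es in d1.
have [cp _] := caps (proj1 HM); have [cp' _] := caps (proj1 HM').
have := cp p; have := cp' p.
have [z1|pos] := posnP #|Mp M p :&: Bs M M'|.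
  have [z2|pos'] := posnP #|Mp M' p :&: Bs M' M|; first by lia.
  have [h1 h2] := Qp_pos HM' HM nb pos'; lia.
have [h1 h2] := Qp_pos HM HM' na pos; lia.
Qed.

Lemma Q_le M M' l : stable I M -> stable I M' ->
 #|Ml I M l :&: Bs M M'| + #|Ml I M' l :&: Bs M' M| <=
   #|Ml I M' l :&: Bs M M'| + #|Ml I M l :&: Bs M' M|.
Proof.
move=> HM HM'.
case ha: (alpha M M' l); first exact: (Q_alpha HM HM' ha).1.
case hb: (alpha M' M l).
  have := (Q_alpha HM' HM hb).1; lia.
rewrite !PL -!big_split /=; apply: leq_sum => p /eqP hl.
by apply: Qg_p; rewrite // hl ?ha ?hb.
Qed.

Lemma global M M' : stable I M -> stable I M' ->
  (forall l, #|Ml I M' l :&: Bs M M'| + #|Ml I M l :&: Bs M' M| <=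
   #|Ml I M l :&: Bs M M'| + #|Ml I M' l :&: Bs M' M|) /\
  Bs M M' \subset asg M'.
Proof.
move=> HM HM'.
have sub : forall K K', Bs K K' \subset asg K.
  move=> K K'; apply/subsetP => s; rewrite !inE /bt; by case: (K s).
have s1 := GL M (Bs M M'); rewrite (setIidPl (sub _ _)) in s1.
have s2 := GL M' (Bs M' M); rewrite (setIidPl (sub _ _)) in s2.
have s3 := GL M' (Bs M M'); have s4 := GL M (Bs M' M).
have c3 : #|Bs M M' :&: asg M'| <= #|Bs M M'| by apply/subset_leq_card/subsetIl.
have c4 : #|Bs M' M :&: asg M| <= #|Bs M' M| by apply/subset_leq_card/subsetIl.
have hle : \sum_l (#|Ml I M l :&: Bs M M'| + #|Ml I M' l :&: Bs M' M|) <=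
           \sum_l (#|Ml I M' l :&: Bs M M'| + #|Ml I M l :&: Bs M' M|).
  by apply: leq_sum => l _; apply: Q_le.
rewrite !big_split /= in hle.
split.
  move=> l; have := @sum_eq_pt L predT
     (fun l => #|Ml I M l :&: Bs M M'| + #|Ml I M' l :&: Bs M' M|)
     (fun l => #|Ml I M' l :&: Bs M M'| + #|Ml I M l :&: Bs M' M|).
  move=> /(_ (fun l _ => Q_le l HM HM')).
  rewrite !big_split /= => /(_ _ l isT); lia.
apply/subsetP => s sB.
have e : Bs M M' :&: asg M' = Bs M M'.
  by apply/eqP; rewrite eqEcard subsetIl /=; lia.
by rewrite -e inE in sB; case/andP: sB.
Qed.

Lemma RH M M' s : stable I M -> stable I M' -> (M s == None) = (M' s == None).
Proof.
move=> HM HM'.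
case E: (M s) => [p|]; case E': (M' s) => [q|] //.
  have := subsetP (global HM HM').2 s; rewrite !inE (bt_None E E') E' => /(_ isT).
  by [].
have := subsetP (global HM' HM).2 s; rewrite !inE (bt_None E' E) E => /(_ isT).
by [].
Qed.

Lemma Qeq M M' l : stable I M -> stable I M' ->
 #|Ml I M l :&: Bs M M'| + #|Ml I M' l :&: Bs M' M| =
   #|Ml I M' l :&: Bs M M'| + #|Ml I M l :&: Bs M' M|.
Proof.
move=> HM HM'; have := Q_le l HM HM'; have := (global HM HM').1 l; lia.
Qed.

Lemma pfacts M M' p : stable I M -> stable I M' ->
 [/\ (#|Mp M p :&: Bs M' M| = 0 /\ #|Mp M' p :&: Bs M' M| = 0) \/
     (#|Mp M p :&: Bs M M'| = 0 /\ #|Mp M' p :&: Bs M M'| = 0),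
     (#|Mp M p :&: Bs M' M| = 0 -> #|Mp M' p :&: Bs M' M| = 0 ->
        #|Mp M p| < #|Mp M' p| -> alpha M M' (lec I p)),
     (0 < #|Mp M' p :&: Bs M M'| -> 0 < #|Mp M p :&: Bs M M'| \/ alpha M M' (lec I p)) &
     (~~ alpha M M' (lec I p) -> ~~ alpha M' M (lec I p) -> #|Mp M p| = #|Mp M' p|)].
Proof.
move=> HM HM'; set l := lec I p.
have d1 := decomp (Mp M p) (proj1 HM) (proj1 HM').
have d2 := decomp (Mp M' p) (proj1 HM) (proj1 HM').
rewrite Mp_Es in d1.
have [cp _] := caps (proj1 HM); have [cp' _] := caps (proj1 HM').
have := cp p; have := cp' p => c1 c2.
have Qe := Qeq l HM HM'.
case ha: (alpha M M' l).
  have [_ H] := Q_alpha HM HM' ha.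
  have [_ hb] := H (eq_leq (esym Qe)); have e := hb p erefl.
  have [z|pos] := posnP #|Mp M' p :&: Bs M' M|.
    split; [lia | by [] | by right | by []].
  have [h1 h2] := Palpha HM HM' ha pos.
  split; [lia | by [] | by right | by []].
case hb: (alpha M' M l).
  have [_ H] := Q_alpha HM' HM hb.
  have [_ hb'] := H (ltac:(lia)); have e := hb' p erefl.
  have [z|pos] := posnP #|Mp M p :&: Bs M M'|.
    split; [lia | move=> *; exfalso; lia | move=> *; left; lia | by []].
  have [h1 h2] := Palpha HM' HM hb pos.
  split; [lia | move=> *; exfalso; lia | move=> *; left; lia | by []].
have hpt : forall q, lec I q == l ->
   #|Mp M q :&: Bs M M'| + #|Mp M' q :&: Bs M' M| <=
   #|Mp M' q :&: Bs M M'| + #|Mp M q :&: Bs M' M|.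
  by move=> q /eqP hl; apply: Qg_p; rewrite // hl ?ha ?hb.
have := @sum_eq_pt P (fun q => lec I q == l) _ _ hpt.
rewrite !big_split /= -!PL => /(_ (ltac:(lia)) p (eqxx _)) => ep.
have [z|pos] := posnP #|Mp M p :&: Bs M M'|.
  have [z'|pos'] := posnP #|Mp M' p :&: Bs M' M|.
    split; [lia | move=> *; exfalso; lia | move=> *; left; lia | move=> *; lia].
  have [h1 h2] := Qp_pos HM' HM (negbT hb) pos'.
  split; [lia | move=> *; exfalso; lia | move=> *; left; lia | move=> *; lia].
have [h1 h2] := Qp_pos HM HM' (negbT ha) pos.
split; [lia | move=> *; exfalso; lia | move=> *; left; lia | move=> *; lia].
Qed.

Definition noC K K' p : Prop := forall s, K s = Some p \/ K' s = Some p -> ~~ bt K' K s.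

Lemma card0_mem (A B : {set S}) s : #|A :&: B| = 0 -> s \in A -> s \in B -> False.
Proof.
move/eqP; rewrite cards_eq0 => /eqP e hA hB.
have : s \in A :&: B by rewrite inE hA hB.
by rewrite e inE.
Qed.
Lemma mem_card0 (A B : {set S}) : (forall s, s \in A -> s \in B -> False) -> #|A :&: B| = 0.
Proof.
move=> H; apply/eqP; rewrite cards_eq0; apply/eqP/setP => s; rewrite !inE.
by apply/negbTE/negP => /andP [h1 h2]; exact: H h1 h2.
Qed.

Lemma NB M M' p : stable I M -> stable I M' -> noC M M' p \/ noC M' M p.
Proof.
move=> HM HM'; have [[[z1 z2]|[z1 z2]] _ _ _] := pfacts p HM HM'.
  left => s [] e; apply/negP => h.
    by apply: (card0_mem z1 (s:=s)); rewrite inE ?e.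
  by apply: (card0_mem z2 (s:=s)); rewrite inE ?e.
right => s [] e; apply/negP => h.
  by apply: (card0_mem z2 (s:=s)); rewrite inE ?e.
by apply: (card0_mem z1 (s:=s)); rewrite inE ?e.
Qed.

Lemma SL2 M M' p : stable I M -> stable I M' -> noC M M' p ->
  #|Mp M p| < #|Mp M' p| -> alpha M M' (lec I p).
Proof.
move=> HM HM' H; have [_ h _ _] := pfacts p HM HM'; apply: h.
  apply: mem_card0 => s; rewrite !inE => /eqP e b.
  by have := H s (or_introl e); rewrite b.
apply: mem_card0 => s; rewrite !inE => /eqP e b.
by have := H s (or_intror e); rewrite b.
Qed.

Lemma SL3 M M' u q : stable I M -> stable I M' -> bt M M' u -> M' u = Some q ->
  exists2 x, x \in Ml I M (lec I q) & lrank I (lec I q) u <= lrank I (lec I q) x.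
Proof.
move=> HM HM' bu eu; have [_ _ h _] := pfacts q HM HM'.
have pos : 0 < #|Mp M' q :&: Bs M M'|.
  by rewrite card_gt0; apply/set0Pn; exists u; rewrite !inE eu eqxx.
case: (h pos).
  rewrite card_gt0 => /set0Pn [x]; rewrite !inE => /andP [/eqP ex bx].
  exists x; first by apply: Mp_Ml; rewrite inE ex.
  by apply: (L1r (proj1 HM) HM' bx ex); rewrite inE eu.
move=> /andP [_ /existsP [s0 /and3P [h1 h2 /forallP h3]]].
exists s0 => //; apply: (implyP (h3 u)); apply: Mp_Ml; by rewrite inE eu.
Qed.

Lemma CL M M' l : stable I M -> stable I M' -> #|Ml I M l| = #|Ml I M' l|.
Proof.
move=> HM HM'; have Qe := Qeq l HM HM'.
case ha: (alpha M M' l).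
  by have [_ H] := Q_alpha HM HM' ha; have [] := H (eq_leq (esym Qe)).
case hb: (alpha M' M l).
  by have [_ H] := Q_alpha HM' HM hb; have [] := H (ltac:(lia)).
rewrite -(setIT (Ml I M l)) -(setIT (Ml I M' l)) !PL; apply: eq_bigr => p /eqP hl.
rewrite !setIT; have [_ _ _ h4] := pfacts p HM HM'; by apply: h4; rewrite hl ?ha ?hb.
Qed.

Lemma CN M M' l : stable I M -> stable I M' ->
  #|Ml I M l :&: Bs M' M| = #|Ml I M' l :&: Bs M' M| /\
  #|Ml I M l :&: Bs M M'| = #|Ml I M' l :&: Bs M M'|.
Proof.
move=> HM HM'; have Qe := Qeq l HM HM'; have c := CL l HM HM'.
have d1 := decomp (Ml I M l) (proj1 HM) (proj1 HM').
have d2 := decomp (Ml I M' l) (proj1 HM) (proj1 HM').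
rewrite Ml_Es in d1; lia.
Qed.

Lemma meetE M M' s : matching I M -> matching I M' ->
  meet I M M' s = if bt M' M s then M' s else M s.
Proof.
move=> HM HM'; rewrite /meet ffunE /better_opt.
case: (classify s HM HM') => [[e h1 h2]|[h1 h2 h3]|[h1 h2 h3]].
- by rewrite h2 -e; case: (M s) => [x|] //; rewrite leqnn.
- rewrite h2; move: h1; rewrite /bt.
  by case: (M s) => [x|]; case: (M' s) => [y|] //= lt; rewrite /sprefers in lt; rewrite ltnW.
- rewrite h1; move: h1; rewrite /bt.
  by case: (M s) => [x|]; case: (M' s) => [y|] //= lt; rewrite /sprefers in lt; rewrite leqNgt lt.
Qed.

Lemma joinE M M' s : matching I M -> matching I M' ->
  join I M M' s = if bt M M' s then M' s else M s.
Proof.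
move=> HM HM'; rewrite /join ffunE /worse_opt.
case: (classify s HM HM') => [[e h1 h2]|[h1 h2 h3]|[h1 h2 h3]].
- by rewrite h1 -e; case: (M s) => [x|] //; rewrite leqnn.
- rewrite h1; move: h1; rewrite /bt.
  by case: (M s) => [x|]; case: (M' s) => [y|] //= lt; rewrite /sprefers in lt; rewrite ltnW.
- rewrite h2; move: h1; rewrite /bt.
  by case: (M s) => [x|]; case: (M' s) => [y|] //= lt; rewrite /sprefers in lt; rewrite leqNgt lt.
Qed.

Lemma meet_sym M M' : matching I M -> matching I M' -> meet I M M' = meet I M' M.
Proof.
move=> HM HM'; apply/ffunP => s; rewrite !meetE //.
by case: (classify s HM HM') => [[e -> ->]|[-> -> _]|[-> -> _]].
Qed.
Lemma join_sym M M' : matching I M -> matching I M' -> join I M M' = join I M' M.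
Proof.
move=> HM HM'; apply/ffunP => s; rewrite !joinE //.
by case: (classify s HM HM') => [[e -> ->]|[-> -> _]|[-> -> _]].
Qed.

Lemma meet_or M M' s : meet I M M' s = M s \/ meet I M M' s = M' s.
Proof.
rewrite /meet ffunE /better_opt.
by case: (M s) => [x|]; case: (M' s) => [y|] //; try case: ifP; auto.
Qed.
Lemma join_or M M' s : join I M M' s = M s \/ join I M M' s = M' s.
Proof.
rewrite /join ffunE /worse_opt.
by case: (M s) => [x|]; case: (M' s) => [y|] //; try case: ifP; auto.
Qed.

Lemma pref_meet M M' s p : pref s p (meet I M M' s) -> pref s p (M s) /\ pref s p (M' s).
Proof.
rewrite /meet ffunE /better_opt /pref /sprefers.
case: (M s) => [x|]; case: (M' s) => [y|] /=; try by move=> *; split.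
case: ifP => h lt; split => //; first by apply: leq_trans lt h.
by apply: ltn_trans lt _; rewrite ltnNge h.
Qed.

Lemma Ml_or N M M' l t : (forall s, N s = M s \/ N s = M' s) ->
  t \in Ml I N l -> t \in Ml I M l \/ t \in Ml I M' l.
Proof. by move=> H; rewrite !inMl; case: (H t) => ->; auto. Qed.

Lemma MlN_card M M' l : stable I M -> stable I M' ->
  #|Ml I (meet I M M') l| = #|Ml I M l|.
Proof.
move=> HM HM'; move: (proj1 HM) (proj1 HM') => mM mM'.
rewrite -(cardsID (Bs M' M) (Ml I (meet I M M') l)) -(cardsID (Bs M' M) (Ml I M l)).
have e1 : Ml I (meet I M M') l :&: Bs M' M = Ml I M' l :&: Bs M' M.
  apply/setP => s; rewrite !inE meetE //.
  by case: (bt M' M s); rewrite ?andbF ?andbT.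
have e2 : Ml I (meet I M M') l :\: Bs M' M = Ml I M l :\: Bs M' M.
  apply/setP => s; rewrite !inE meetE //.
  by case: (bt M' M s).
by rewrite e1 e2 (CN l HM HM').1.
Qed.

Lemma MlJ_card M M' l : stable I M -> stable I M' ->
  #|Ml I (join I M M') l| = #|Ml I M l|.
Proof.
move=> HM HM'; move: (proj1 HM) (proj1 HM') => mM mM'.
rewrite -(cardsID (Bs M M') (Ml I (join I M M') l)) -(cardsID (Bs M M') (Ml I M l)).
have e1 : Ml I (join I M M') l :&: Bs M M' = Ml I M' l :&: Bs M M'.
  apply/setP => s; rewrite !inE joinE //.
  by case: (bt M M' s); rewrite ?andbF ?andbT.
have e2 : Ml I (join I M M') l :\: Bs M M' = Ml I M l :\: Bs M M'.
  apply/setP => s; rewrite !inE joinE //.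
  by case: (bt M M' s).
by rewrite e1 e2 (CN l HM HM').2.
Qed.

Lemma MpN M M' p : matching I M -> matching I M' -> noC M M' p ->
  Mp (meet I M M') p = Mp M p.
Proof.
move=> HM HM' H; apply/setP => s; rewrite !inE meetE //.
case h: (bt M' M s) => //.
case e1: (M' s == Some p); first by have := H s (or_intror (eqP e1)); rewrite h.
case e2: (M s == Some p) => //; by have := H s (or_introl (eqP e2)); rewrite h.
Qed.

Lemma MpJ M M' p : matching I M -> matching I M' -> noC M M' p ->
  Mp (join I M M') p = Mp M' p.
Proof.
move=> HM HM' H; apply/setP => s; rewrite !inE joinE //.
case: (classify s HM HM') => [[e h1 h2]|[h1 h2 h3]|[h1 h2 h3]].
- by rewrite h1 e.
- by rewrite h1.
- rewrite h2.
  case e1: (M' s == Some p); first by have := H s (or_intror (eqP e1)); rewrite h1.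
  case e2: (M s == Some p) => //; by have := H s (or_introl (eqP e2)); rewrite h1.
Qed.

Lemma MpJ' M M' p : matching I M -> matching I M' -> noC M' M p ->
  Mp (join I M M') p = Mp M p.
Proof.
move=> HM HM' H; apply/setP => s; rewrite !inE joinE //.
case h: (bt M M' s) => //.
case e1: (M' s == Some p); first by have := H s (or_introl (eqP e1)); rewrite h.
case e2: (M s == Some p) => //; by have := H s (or_intror (eqP e2)); rewrite h.
Qed.

Definition okp N s p : Prop :=
 (p_under I N p -> [/\ ~~ l_under I N (lec I p), s \notin Ml I N (lec I p) &
     forall t, t \in Ml I N (lec I p) -> lrank I (lec I p) t <= lrank I (lec I p) s]) /\
 (~~ p_under I N p -> forall t, t \in Mp N p -> lrank I (lec I p) t <= lrank I (lec I p) s).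

Lemma meet_aux M M' s p : stable I M -> stable I M' -> noC M M' p ->
  acceptable I s p -> pref s p (meet I M M' s) -> okp (meet I M M') s p.
Proof.
move=> HM HM' H ha hp; move: (proj1 HM) (proj1 HM') => mM mM'.
have [pM pM'] := pref_meet hp.
have [HA1 HA2] := nbl HM ha pM.
have [HB1 HB2] := nbl HM' ha pM'.
have eMp := MpN mM mM' H.
have lN : l_under I (meet I M M') (lec I p) = l_under I M (lec I p).
  by rewrite /l_under MlN_card.
have uN : p_under I (meet I M M') p = p_under I M p by rewrite /p_under eMp.
rewrite /okp uN lN eMp; split; last exact: HA2.
move=> hu; have [lu ns hall] := HA1 hu.
have [ns' hall'] : s \notin Ml I M' (lec I p) /\
    forall t, t \in Ml I M' (lec I p) -> lrank I (lec I p) t <= lrank I (lec I p) s.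
  case hu': (p_under I M' p); first by have [_ ns' hall'] := HB1 hu'; split.
  have lt : #|Mp M p| < #|Mp M' p| by rewrite (pfull mM' (negbT hu')); exact: hu.
  move: (SL2 HM HM' H lt) => /andP [_ /existsP [s0 /and3P [h1 h2 /forallP h3]]].
  have s0s := hall s0 h1.
  have h3' : forall t, t \in Ml I M' (lec I p) -> lrank I (lec I p) t <= lrank I (lec I p) s0.
    by move=> t ht; exact: implyP (h3 t) ht.
  split; last by move=> t ht; apply: leq_trans (h3' t ht) s0s.
  apply/negP => hs; have h' := h3' s hs.
  have e : s = s0.
    by apply: linj (acc_on ha) (Ml_on mM h1) _; apply/eqP; rewrite eqn_leq h' s0s.
  by rewrite -e hs in h2.
split => //.
  apply/negP => /(Ml_or (meet_or M M')) [] hx.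
    by rewrite hx in ns.
  by rewrite hx in ns'.
by move=> t /(Ml_or (meet_or M M')) [] ht; [exact: hall | exact: hall'].
Qed.

Lemma matching_meet M M' : stable I M -> stable I M' -> matching I (meet I M M').
Proof.
move=> HM HM'; move: (proj1 HM) (proj1 HM') => mM mM'.
split.
- move=> s p; case: (meet_or M M' s) => -> E; [exact: match_acc mM E | exact: match_acc mM' E].
- move=> p; case: (NB p HM HM') => H.
    by rewrite MpN //; exact: (caps mM).1.
  by rewrite meet_sym // MpN //; exact: (caps mM').1.
- by move=> l; rewrite MlN_card //; exact: (caps mM).2.
Qed.

Lemma meet_stable M M' : stable I M -> stable I M' -> stable I (meet I M M').
Proof.
move=> HM HM'; move: (proj1 HM) (proj1 HM') => mM mM'.
apply: stable_of; first exact: matching_meet.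
move=> s p ha hp; case: (NB p HM HM') => H; first exact: meet_aux.
rewrite meet_sym // in hp *.
exact: meet_aux HM' HM H ha hp.
Qed.

Lemma Jdom M M' l t : stable I M -> stable I M' -> t \in Ml I (join I M M') l ->
  exists2 y, y \in Ml I M' l & lrank I l t <= lrank I l y.
Proof.
move=> HM HM'; move: (proj1 HM) (proj1 HM') => mM mM'.
rewrite inMl joinE //; case h: (bt M M' t) => ht.
  by exists t; rewrite ?inMl.
case: (classify t mM mM') => [[e _ _]|[h1 _ _]|[h1 _ _]].
- by exists t; rewrite // inMl -e.
- by rewrite h1 in h.
- move: ht; case E: (M t) => [q|] // /eqP hl.
  have [x hx hr] := SL3 HM' HM h1 E.
  by exists x; rewrite -hl.
Qed.

Lemma JdomM M M' l t : stable I M -> stable I M' -> t \in Ml I (join I M M') l ->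
  exists2 y, y \in Ml I M l & lrank I l t <= lrank I l y.
Proof.
move=> HM HM'; move: (proj1 HM) (proj1 HM') => mM mM'.
rewrite join_sym //; exact: Jdom.
Qed.

Lemma join_aux M M' s p : stable I M -> stable I M' -> acceptable I s p ->
  ~~ bt M M' s -> pref s p (M s) -> okp (join I M M') s p.
Proof.
move=> HM HM' ha nb pM; move: (proj1 HM) (proj1 HM') => mM mM'.
have eJs : join I M M' s = M s by rewrite joinE // (negbTE nb).
have [HA1 HA2] := nbl HM ha pM.
have lJ : l_under I (join I M M') (lec I p) = l_under I M (lec I p).
  by rewrite /l_under MlJ_card.
have lJ' : l_under I M (lec I p) = l_under I M' (lec I p).
  by rewrite /l_under (CL _ HM HM').
have WJ : s \notin Ml I M (lec I p) ->
    (forall t, t \in Ml I M (lec I p) -> lrank I (lec I p) t <= lrank I (lec I p) s) ->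
    s \notin Ml I (join I M M') (lec I p) /\
    forall t, t \in Ml I (join I M M') (lec I p) -> lrank I (lec I p) t <= lrank I (lec I p) s.
  move=> ns hall; split; first by rewrite inMl eJs -inMl.
  by move=> t ht; have [y hy hr] := JdomM HM HM' ht; apply: leq_trans hr (hall y hy).
have onx : forall x, x \in Mp M p -> on_list I (lec I p) x.
  by move=> x hx; apply: Ml_on mM (Mp_Ml hx).
case: (NB p HM HM') => H.
- have eMp := MpJ mM mM' H.
  rewrite /okp /p_under eMp; split.
  + move=> hu; case hM: (p_under I M p).
      have [lu ns hall] := HA1 hM; have [w1 w2] := WJ ns hall.
      by split => //; rewrite lJ.
    have hfull := pfull mM (negbT hM).
    have d1 := decomp (Mp M p) mM mM'.
    have z : #|Mp M p :&: Bs M' M| = 0.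
      apply: mem_card0 => x; rewrite !inE => /eqP ex bx.
      by have := H x (or_introl ex); rewrite bx.
    have ce : #|Mp M p :&: Es M M'| <= #|Mp M' p|.
      by rewrite Mp_Es; apply/subset_leq_card/subsetIl.
    have : 0 < #|Mp M p :&: Bs M M'| by move: hu; rewrite /p_under; lia.
    rewrite card_gt0 => /set0Pn [x]; rewrite !inE => /andP [/eqP ex bx].
    have [L11 _] := L1 mM HM' bx ex; have [lu' nx hallx] := L11 hu.
    have xs : lrank I (lec I p) x <= lrank I (lec I p) s.
      by apply: (HA2 (negbT hM)); rewrite inE ex.
    split; first by rewrite lJ lJ'.
      apply/negP => hs.
      move: hs; rewrite -inMl => hs.
      have [y hy hr] := Jdom HM HM' hs.
      have := hallx y hy => hyx.
      have e : s = x.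
        apply: linj (acc_on ha) (onx x _) _; first by rewrite inE ex.
        by apply/eqP; rewrite eqn_leq xs (leq_trans hr hyx).
      by rewrite e bx in nb.
    move=> t ht; have [y hy hr] := Jdom HM HM' ht.
    exact: leq_trans (leq_trans hr (hallx y hy)) xs.
  + move=> hf t ht; case hM: (p_under I M p).
      have lt : #|Mp M p| < #|Mp M' p| by rewrite (pfull mM' hf); exact: hM.
      move: (SL2 HM HM' H lt) => /andP [_ /existsP [s0 /and3P [h1 h2 /forallP h3]]].
      have [_ _ hall] := HA1 hM.
      apply: leq_trans (hall s0 h1); apply: (implyP (h3 t)); exact: Mp_Ml.
    have HA2' := HA2 (negbT hM).
    case tin: (t \in Mp M p); first exact: HA2'.
    move: ht tin; rewrite !inE => /eqP et.
    case: (classify t mM mM') => [[e _ _]|[h1 _ _]|[h1 _ _]].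
    * by rewrite e et eqxx.
    * move=> _.
      have hfull := pfull mM (negbT hM).
      have [cp' _] := caps mM'; have := cp' p.
      have d1 := decomp (Mp M p) mM mM'.
      have d2 := decomp (Mp M' p) mM mM'.
      rewrite Mp_Es in d1.
      have z : #|Mp M p :&: Bs M' M| = 0.
        apply: mem_card0 => x; rewrite !inE => /eqP ex bx.
        by have := H x (or_introl ex); rewrite bx.
      have pos' : 0 < #|Mp M' p :&: Bs M M'|.
        by rewrite card_gt0; apply/set0Pn; exists t; rewrite !inE et eqxx h1.
      move=> hc.
      have : 0 < #|Mp M p :&: Bs M M'| by lia.
      rewrite card_gt0 => /set0Pn [x]; rewrite !inE => /andP [/eqP ex bx].
      apply: leq_trans (L1r mM HM' bx ex _) (HA2' x _); by rewrite inE ?et ?ex.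
    * by have := H t (or_intror et); rewrite h1.
- have eMp := MpJ' mM mM' H.
  rewrite /okp /p_under eMp; split; last exact: HA2.
  move=> hu; have [lu ns hall] := HA1 hu; have [w1 w2] := WJ ns hall.
  by split => //; rewrite lJ.
Qed.

Lemma matching_join M M' : stable I M -> stable I M' -> matching I (join I M M').
Proof.
move=> HM HM'; move: (proj1 HM) (proj1 HM') => mM mM'.
split.
- move=> s p; case: (join_or M M' s) => -> E; [exact: match_acc mM E | exact: match_acc mM' E].
- move=> p; case: (NB p HM HM') => H.
    by rewrite MpJ //; exact: (caps mM').1.
  by rewrite MpJ' //; exact: (caps mM).1.
- by move=> l; rewrite MlJ_card //; exact: (caps mM).2.
Qed.

Lemma join_stable M M' : stable I M -> stable I M' -> stable I (join I M M').
Proof.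
move=> HM HM'; move: (proj1 HM) (proj1 HM') => mM mM'.
apply: stable_of; first exact: matching_join.
move=> s p ha hp; case h: (bt M M' s).
  have nb' : ~~ bt M' M s by apply/negP => h'; exact: bt_excl h h'.
  rewrite join_sym // in hp *.
  move: hp; rewrite joinE // (negbTE nb') => hp.
  exact: join_aux HM' HM ha nb' hp.
move: hp; rewrite joinE // h => hp.
exact: join_aux HM HM' ha (negbT h) hp.
Qed.

Lemma spo_trans s o1 o2 o3 : sprefers_opt I s o1 o2 -> sprefers_opt I s o2 o3 ->
  sprefers_opt I s o1 o3.
Proof.
case: o1 => [x|] //; case: o2 => [y|] //; case: o3 => [z|] //=.
rewrite /sprefers; exact: ltn_trans.
Qed.

Lemma sdom_meet_l M M' : stable I M -> stable I M' -> sdom I (meet I M M') M.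
Proof.
move=> HM HM' s; move: (proj1 HM) (proj1 HM') => mM mM'.
rewrite meetE //; case h: (bt M' M s); last by rewrite eqxx orbT.
move: h (RH s HM HM'); rewrite /bt.
case: (M' s) => [y|]; case: (M s) => [x|] //= h _; by rewrite h.
Qed.

Lemma sdom_join_l M M' : stable I M -> stable I M' -> sdom I M (join I M M').
Proof.
move=> HM HM' s; move: (proj1 HM) (proj1 HM') => mM mM'.
rewrite joinE //; case h: (bt M M' s); last by rewrite eqxx orbT.
move: h (RH s HM HM'); rewrite /bt.
case: (M s) => [x|]; case: (M' s) => [y|] //= h _; by rewrite h.
Qed.

Lemma bo_some s a b : exists c, [/\ better_opt I s (Some a) (Some b) = Some c,
   c = a \/ c = b & srank I s c = minn (srank I s a) (srank I s b)].
Proof.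
rewrite /better_opt; case: leqP => h.
  exists a; split; [by [] | by left | lia].
exists b; split; [by [] | by right | lia].
Qed.
Lemma wo_some s a b : exists c, [/\ worse_opt I s (Some a) (Some b) = Some c,
   c = a \/ c = b & srank I s c = maxn (srank I s a) (srank I s b)].
Proof.
rewrite /worse_opt; case: leqP => h.
  exists b; split; [by [] | by right | lia].
exists a; split; [by [] | by left | lia].
Qed.

Lemma distr M1 M2 M3 : stable I M1 -> stable I M2 -> stable I M3 ->
  meet I M1 (join I M2 M3) = join I (meet I M1 M2) (meet I M1 M3).
Proof.
move=> H1 H2 H3; apply/ffunP => s; rewrite !ffunE.
have r12 := RH s H1 H2; have r13 := RH s H1 H3.
case E1: (M1 s) => [x|]; case E2: (M2 s) => [y|]; case E3: (M3 s) => [z|];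
  rewrite E1 E2 E3 in r12 r13 => //.
have ax : sacc I s x by case/andP: (match_acc (proj1 H1) E1).
have ay : sacc I s y by case/andP: (match_acc (proj1 H2) E2).
have az : sacc I s z by case/andP: (match_acc (proj1 H3) E3).
have [w [-> ow rw]] := wo_some s y z.
have [u [-> ou ru]] := bo_some s x w.
have [b1 [-> o1 rb1]] := bo_some s x y.
have [b2 [-> o2 rb2]] := bo_some s x z.
have [v [-> ov rv]] := wo_some s b1 b2.
congr Some.
have acc : forall c, c = x \/ c = y \/ c = z -> sacc I s c.
  by move=> c [->|[->|->]].
apply: sinj (acc u _) (acc v _) _.
- by case: ou => ->; [left | case: ow => ->; right; [left | right]].
- by case: ov => ->; [case: o1 => -> | case: o2 => ->]; auto.
- rewrite ru rv rb1 rb2 rw; lia.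
Qed.

End Proofs.

Theorem theorem2 (S P L : finType) (I : spa_instance S P L) :
  (* ≼ is a partial order on the set of stable matchings *)
  ((forall M, stable I M -> sdom I M M) /\
      (forall M M', stable I M -> stable I M' ->
         sdom I M M' -> sdom I M' M -> M = M') /\
      (forall M1 M2 M3, stable I M1 -> stable I M2 -> stable I M3 ->
         sdom I M1 M2 -> sdom I M2 M3 -> sdom I M1 M3) /\
  (* meet and join are stable, and are the glb / lub *)
      (forall M M', stable I M -> stable I M' ->
         [/\ stable I (meet I M M'),
             sdom I (meet I M M') M, sdom I (meet I M M') M' &
             forall N, stable I N -> sdom I N M -> sdom I N M' ->
                       sdom I N (meet I M M')]) /\
      (forall M M', stable I M -> stable I M' ->
         [/\ stable I (join I M M'),
             sdom I M (join I M M'), sdom I M' (join I M M') &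
             forall N, stable I N -> sdom I M N -> sdom I M' N ->
                       sdom I (join I M M') N]) /\
  (* distributivity *)
      (forall M1 M2 M3, stable I M1 -> stable I M2 -> stable I M3 ->
         meet I M1 (join I M2 M3) = join I (meet I M1 M2) (meet I M1 M3))).
Proof.
split.
  by move=> M _ s; rewrite eqxx orbT.
split.
  move=> M M' _ _ h1 h2; apply/ffunP => s; move: (h1 s) (h2 s).
  case: (M s) => [x|]; case: (M' s) => [y|] //=; rewrite /sprefers.
  case/orP => [a|/eqP -> //]; case/orP => [b|/eqP -> //].
  by move: (ltn_trans a b); rewrite ltnn.
split.
  move=> M1 M2 M3 _ _ _ h1 h2 s; move: (h1 s) (h2 s).
  case/orP => [a|/eqP ->]; case/orP => [b|/eqP <-]; rewrite ?eqxx ?orbT //.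
  by rewrite (spo_trans a b).
split.
  move=> M M' HM HM'; split.
  - exact: meet_stable.
  - exact: sdom_meet_l.
  - rewrite meet_sym; [exact: sdom_meet_l | exact: (proj1 HM) | exact: (proj1 HM')].
  - move=> N _ h1 h2 s; case: (meet_or I M M' s) => ->; [exact: h1 | exact: h2].
split.
  move=> M M' HM HM'; split.
  - exact: join_stable.
  - exact: sdom_join_l.
  - rewrite join_sym; [exact: sdom_join_l | exact: (proj1 HM) | exact: (proj1 HM')].
  - move=> N _ h1 h2 s; case: (join_or I M M' s) => ->; [exact: h1 | exact: h2].
exact: distr.
Qed.
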